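(* Fix integers $m\ge d\ge1$, $\lambda=d/m$, and $\sigma>0$. Let $p_1,p_2,\dots$ be monic polynomials of degree $d$, $p_i(x)=\prod_{j=1}^d(x-r_{i,j}^2)$ with $r_{i,j}$ real, such that $\frac1d\sum_j r_{i,j}^2\le\sigma^2$ for all $i$. For $N\ge1$ let $P_N=p_1\boxplus_{d,\lambda}\cdots\boxplus_{d,\lambda}p_N$ and let $\widetilde P_N$ be the monic polynomial of degree $2d$ whose roots are the roots of $\mathbb{S}P_N$ multiplied by $1/N$. Then $\widetilde P_N\to x^{2d}$ (coefficientwise) as $N\to\infty$.
   Context: $(p\boxplus_{d,\lambda}q)(x)=\sum_{k=0}^dx^{d-k}(-1)^k\sum_{i+j=k}\frac{(d-i)!(d-j)!}{d!(d-k)!}\frac{(m-i)!(m-j)!}{m!(m-k)!}a_ib_j$ for $p=\sum(-1)^ia_ix^{d-i}$, $q=\sum(-1)^ib_ix^{d-i}$; this operation is associative, bilinear and preserves monic polynomials with nonnegative real roots. $\mathbb{S}P(x)=P(x^2)$. *)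

(* Defs.v *)
From HB Require Import structures.
From mathcomp Require Import all_boot all_order all_algebra.
From mathcomp Require Import all_classical all_reals all_analysis.
Set Implicit Arguments. Unset Strict Implicit. Unset Printing Implicit Defensive.
Import Order.TTheory GRing.Theory Num.Theory.
Local Open Scope ring_scope.

Section RectConv.
Variable R : realType.

(* a_i of p = sum (-1)^i a_i x^(d-i), i.e. a_i = (-1)^i p_(d-i) *)
Definition rcoef (d : nat) (p : {poly R}) (i : nat) : R :=
  (-1) ^+ i * p`_(d - i).

Definition rweight (d m i j : nat) : R :=
  ((d - i)`!%:R * (d - j)`!%:R / (d`!%:R * (d - (i + j))`!%:R)) *
  ((m - i)`!%:R * (m - j)`!%:R / (m`!%:R * (m - (i + j))`!%:R)).

Definition rconv (d m : nat) (p q : {poly R}) : {poly R} :=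
  \sum_(k < d.+1)
     ((-1) ^+ k * \sum_(i < k.+1) rweight d m i (k - i)
                     * rcoef d p i * rcoef d q (k - i)) *: 'X^(d - k).

(* P_{n+1} = p_0 ⊞ p_1 ⊞ ... ⊞ p_n  (left-nested) *)
Fixpoint rconv_iter (d m : nat) (p : nat -> {poly R}) (n : nat) : {poly R} :=
  match n with
  | 0 => p 0%N
  | n'.+1 => rconv d m (rconv_iter d m p n') (p n)
  end.

Definition polyS (P : {poly R}) : {poly R} := P \Po 'X^2.

(* monic polynomial of degree deg whose roots are those of the monic Q
   (of degree deg) multiplied by 1/N:  N^(-deg) Q(N x) *)
Definition root_scale (deg N : nat) (Q : {poly R}) : {poly R} :=
  (N%:R ^- deg) *: (Q \Po (N%:R *: 'X)).

End RectConv.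

(* Main.v *)
Require Import Defs.
From HB Require Import structures.
From mathcomp Require Import all_boot all_order all_algebra.
From mathcomp Require Import all_classical all_reals all_analysis.
From mathcomp Require Import zify ring.
Import Order.TTheory GRing.Theory Num.Theory.
Import numFieldNormedType.Exports.
Local Open Scope ring_scope.

Section Aux.
Variable R : realType.

Lemma coef_comp_scaleX (q : {poly R}) (a : R) k :
  (q \Po (a *: 'X))`_k = a ^+ k * q`_k.
Proof.
rewrite coef_comp_poly.
under eq_bigr => i _ do rewrite exprZn coefZ coefXn.
case: (ltnP k (size q)) => hk.
  rewrite (bigD1 (Ordinal hk)) //= eqxx mulr1 big1 ?addr0 1?mulrC //.
  move=> j hj.
  have -> : (k == j :> nat) = false.
    apply/negbTE; apply: contra hj => /eqP h; apply/eqP/val_inj; by rewrite /= h.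
  by rewrite !mulr0.
rewrite big1 ?nth_default ?mulr0 // => i _.
by rewrite gtn_eqF ?mulr0 // (leq_trans (ltn_ord i) hk).
Qed.

Lemma rconv_coef d m (P q : {poly R}) k : (k <= d)%N ->
  rcoef d (rconv d m P q) k =
  \sum_(i < k.+1) rweight R d m i (k - i) * rcoef d P i * rcoef d q (k - i).
Proof.
move=> hk; rewrite /rcoef /rconv coef_sum.
under eq_bigr => j _ do rewrite coefZ coefXn.
have hk' : (k < d.+1)%N by [].
rewrite (bigD1 (Ordinal hk')) //= eqxx mulr1 [X in _ + X]big1 ?addr0.
  by rewrite mulrA -exprD -signr_odd oddD addbb mul1r.
move=> j hj.
have -> : ((d - k)%N == (d - j)%N) = false.
  apply/negbTE; apply: contra hj => /eqP h; apply/eqP/val_inj => /=.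
  have := ltn_ord j; lia.
by rewrite mulr0.
Qed.

Lemma rconv_coef_high d m (P q : {poly R}) j : (d < j)%N ->
  (rconv d m P q)`_j = 0.
Proof.
move=> hj; rewrite /rconv coef_sum big1 // => k _.
rewrite coefZ coefXn.
have -> : (j == (d - k)%N) = false by apply/negbTE; lia.
by rewrite mulr0.
Qed.

Lemma fact_ineq n i j : (i + j <= n)%N ->
  ((n - i)`! * (n - j)`! <= n`! * (n - (i + j))`!)%N.
Proof.
move=> h.
rewrite -(bin_fact (_ : j <= n - i)%N); last by lia.
rewrite -(bin_fact (_ : j <= n)%N); last by lia.
rewrite subnDA.
apply: (leq_trans (_ : _ <= 'C(n, j) * (j`! * (n - i - j)`!) * (n - j)`!)%N).
  by rewrite leq_mul2r leq_mul2r leq_bin2l ?leq_subr ?orbT.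
rewrite -!mulnA leq_mul2l; apply/orP; right.
rewrite leq_mul2l; apply/orP; right.
by rewrite mulnC.
Qed.

Lemma frac_le1 (x y : nat) : (0 < y)%N -> (x <= y)%N ->
  0 <= (x%:R / y%:R : R) <= 1.
Proof.
move=> y0 xy; apply/andP; split.
  by rewrite divr_ge0 ?ler0n.
by rewrite ler_pdivrMr ?ltr0n // mul1r ler_nat.
Qed.

Lemma rweight_norm d m i j : (i + j <= d)%N -> (d <= m)%N ->
  `|rweight R d m i j| <= 1.
Proof.
move=> h dm; rewrite /rweight -!natrM.
have /andP[a1 a2] := frac_le1 _ _ (ltac:(by rewrite muln_gt0 !fact_gt0) : (0 < d`! * (d - (i+j))`!)%N)
   (@fact_ineq d i j h).
have h2 : (i + j <= m)%N by lia.
have /andP[b1 b2] := frac_le1 _ _ (ltac:(by rewrite muln_gt0 !fact_gt0) : (0 < m`! * (m - (i+j))`!)%N)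
   (@fact_ineq m i j h2).
rewrite ger0_norm ?mulr_ge0 //.
by have := ler_pM a1 b1 a2 b2; rewrite mulr1.
Qed.

Lemma rweight00 d m : rweight R d m 0 0 = 1.
Proof.
rewrite /rweight !subn0 !divff ?mulr1 //.
Qed.

Lemma prod_coef_bound n (c : 'I_n -> R) (M : R) : 0 <= M ->
  (forall j, `|c j| <= M) ->
  forall l, `|(\prod_(j < n) ('X - (c j)%:P))`_l| <= (1 + M) ^+ n.
Proof.
move=> M0; elim: n c => [|n IH] c hc l.
  rewrite big_ord0 coef1 expr0; by case: (l == 0%N); rewrite ?normr1 ?normr0.
rewrite big_ord_recr /= mulrBr coefB coefMX coefMC.
have IH' := IH (fun j => c (widen_ord (leqnSn n) j)) (fun j => hc _).
apply: (le_trans (ler_normB _ _)).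
rewrite exprSr mulrDr mulr1.
apply: lerD.
  by case: (l == 0%N); rewrite ?normr0 ?exprn_ge0 ?addr_ge0 // IH'.
rewrite normrM ler_pM //.
Qed.

Lemma geom_le (x : R) k : 0 <= x -> \sum_(i < k.+1) x ^+ i <= (x + 1) ^+ k.
Proof.
move=> x0; elim: k => [|k IH]; first by rewrite big_ord1 !expr0.
rewrite big_ord_recl expr0.
under eq_bigr => i _ do rewrite exprS.
rewrite -mulr_sumr exprS mulrDl mul1r addrC.
apply: lerD; first by rewrite ler_wpM2l.
by rewrite exprn_ege1 // lerDr.
Qed.

Lemma aux_field (y z b : R) : y != 0 -> z != 0 -> (y*z*z)^-1 * (y*(b*z)) = b / z.
Proof. by move=> hy hz; field; rewrite hy hz. Qed.

End Aux.

Local Open Scope classical_set_scope.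

Theorem mainTheorem7 (R : realType) (d m : nat) (sigma : R)
  (p : nat -> {poly R}) (r : nat -> 'I_d -> R) :
  (1 <= d)%N -> (d <= m)%N -> 0 < sigma ->
  (forall i, p i = \prod_(j < d) ('X - (r i j ^+ 2)%:P)) ->
  (forall i, d%:R^-1 * \sum_(j < d) r i j ^+ 2 <= sigma ^+ 2) ->
  forall k : nat,
    (fun n : nat =>
       (root_scale (2 * d) n.+1 (polyS (rconv_iter d m p n)))`_k)
      @ \oo --> ('X^(2 * d) : {poly R})`_k.
Proof.
move=> d1 dm s0 hp hs k.
set M := d%:R * sigma ^+ 2.
have M0 : 0 <= M by rewrite /M mulr_ge0 ?ler0n ?sqr_ge0.
have hr : forall t j, `|r t j ^+ 2| <= M.
  move=> t j; rewrite ger0_norm ?sqr_ge0 //.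
  apply: (le_trans (_ : _ <= \sum_(j0 < d) r t j0 ^+ 2)).
    rewrite (bigD1 j) //= lerDl sumr_ge0 // => *; exact: sqr_ge0.
  have := hs t; rewrite mulrC ler_pdivrMr ?ltr0n // => h.
  by rewrite /M mulrC.
set B := (1 + M) ^+ d.
have B1 : 1 <= B by rewrite /B exprn_ege1 // lerDl.
have B0 : 0 <= B by apply: le_trans B1.
have hsz : forall t, size (p t) = d.+1.
  by move=> t; rewrite hp size_prod_XsubC /index_enum unlock -enumT size_enum_ord.
have hmon : forall t, p t \is monic by move=> t; rewrite hp monic_prod_XsubC.
have hp0 : forall t, rcoef d (p t) 0 = 1.
  move=> t; rewrite /rcoef expr0 mul1r subn0.
  by rewrite -[d]/(d.+1.-1) -(hsz t) -lead_coefE (monicP (hmon t)).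
have hph : forall t j, (d < j)%N -> (p t)`_j = 0.
  by move=> t j hj; rewrite nth_default // hsz.
have hpb : forall t i, `|rcoef d (p t) i| <= B ^+ i.
  move=> t [|i]; first by rewrite hp0 expr0 normr1.
  rewrite /rcoef normrM normrX normrN normr1 expr1n mul1r.
  apply: le_trans (ler_eXnr _ B1) => //.
  rewrite hp; exact: prod_coef_bound M0 (fun j => hr t j) _.
have main : forall n, [/\ rcoef d (rconv_iter d m p n) 0 = 1,
  (forall i, (i <= d)%N ->
     `|rcoef d (rconv_iter d m p n) i| <= B ^+ i * (n.+1%:R) ^+ i) &
  (forall j, (d < j)%N -> (rconv_iter d m p n)`_j = 0)].
  elim=> [|n [IH0 IHb IHh]] /=.
    split => //; [move=> i _; rewrite expr1n mulr1; exact: hpb | exact: hph].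
  split.
  - by rewrite rconv_coef // big_ord1 subnn rweight00 IH0 hp0 !mul1r.
  - move=> i hi; rewrite rconv_coef //.
    apply: (le_trans (ler_norm_sum _ _ _)).
    apply: (le_trans (_ : _ <= \sum_(j < i.+1) B ^+ i * (n.+1%:R) ^+ j)).
      apply: ler_sum => j _.
      have hj : (j <= i)%N by rewrite -ltnS.
      rewrite normrM normrM.
      have -> : B ^+ i * n.+1%:R ^+ j = 1 * (B ^+ j * n.+1%:R ^+ j) * B ^+ (i - j).
        by rewrite mul1r mulrAC -exprD subnKC.
      apply: ler_pM; [by rewrite mulr_ge0 | done | | exact: hpb].
      apply: ler_pM => //.
        apply: rweight_norm => //; rewrite subnKC //.
      apply: IHb; exact: leq_trans hi.
    rewrite -mulr_sumr.
    have -> : n.+2%:R = n.+1%:R + 1 :> R by rewrite -addn1 natrD.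
    rewrite ler_wpM2l ?exprn_ge0 //; [by rewrite addr_ge0 | exact: geom_le].
  - move=> j hj; exact: rconv_coef_high.
have coefE : forall n,
  (root_scale (2 * d) n.+1 (polyS (rconv_iter d m p n)))`_k =
  (n.+1%:R ^- (2 * d)) * (n.+1%:R ^+ k *
     (if (2 %| k)%N then (rconv_iter d m p n)`_(k %/ 2) else 0)).
  by move=> n; rewrite /root_scale /polyS coefZ coef_comp_scaleX coef_comp_poly_Xn.
rewrite coefXn.
case: (boolP (2 %| k)%N) => ev; last first.
  have -> : (k == 2 * d)%N = false.
    apply/negbTE; apply: contra ev => /eqP ->; exact: dvdn_mulr.
  have -> : (fun n => (root_scale (2 * d) n.+1 (polyS (rconv_iter d m p n)))`_k)
      = fun _ => 0.
    by apply: funext => n; rewrite coefE (negbTE ev) !mulr0.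
  exact: cvg_cst.
move: ev => /dvdnP [j hk]; subst k.
case: (ltngtP j d) => hjd.
-
  have -> : (j * 2 == 2 * d)%N = false by apply/negbTE; lia.
  set C := B ^+ d.
  have hb : forall n, `|(root_scale (2 * d) n.+1 (polyS (rconv_iter d m p n)))`_(j * 2)|
      <= C * n.+1%:R^-1.
    move=> n; rewrite coefE dvdn_mull // mulnK //.
    have [_ hbn _] := main n.
    have hi : (0 < d - j)%N by lia.
    have hdi : (d - j <= d)%N by lia.
    have e2 : (2 * d = j * 2 + (d - j) + (d - j))%N by lia.
    have := hbn _ hdi.
    rewrite /rcoef subKn ?(ltnW hjd) // normrM normrX normrN normr1 expr1n mul1r.
    rewrite e2.
    move: (d - j)%N hi hdi => i hi hdi hP.
    set x : R := n.+1%:R.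
    have x1 : 1 <= x by rewrite ler1n.
    have x0 : 0 < x by apply: lt_le_trans x1.
    rewrite normrM normrM normfV !normrX ger0_norm ?(ltW x0) //.
    apply: (le_trans (_ : _ <= (x ^+ (j * 2 + i + i))^-1 * (x ^+ (j * 2) * (B ^+ i * x ^+ i)))).
      by rewrite ler_wpM2l ?invr_ge0 ?exprn_ge0 ?(ltW x0) // ler_wpM2l ?exprn_ge0 ?(ltW x0).
    rewrite !exprD aux_field ?expf_neq0 ?(lt0r_neq0 x0) //.
    apply: ler_pM.
    - exact: exprn_ge0 B0.
    - by rewrite invr_ge0 exprn_ge0 // ltW.
    - exact: ler_weXn2l.
    rewrite lef_pV2 ?posrE ?exprn_gt0 //; exact: ler_eXnr.
  have hh : (fun n : nat => C * n.+1%:R^-1) @ \oo --> 0.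
    have := cvgM (cvg_cst C) (@cvg_harmonic R); rewrite mulr0; exact.
  apply: (@squeeze_cvgr _ _ _ _ (fun n => - (C * n.+1%:R^-1)) (fun n => C * n.+1%:R^-1)).
  - apply: nearW => n; rewrite -ler_norml; exact: hb n.
  - have := cvgN hh; rewrite oppr0; exact.
  - exact: hh.
- have -> : (j * 2 == 2 * d)%N = false by apply/negbTE; lia.
  have -> : (fun n => (root_scale (2 * d) n.+1 (polyS (rconv_iter d m p n)))`_(j * 2))
      = fun _ => 0.
    apply: funext => n; rewrite coefE dvdn_mull // mulnK //.
    by have [_ _ hh] := main n; rewrite hh ?mulr0.
  exact: cvg_cst.
- subst j.
  have -> : (d * 2 == 2 * d)%N by rewrite mulnC.
  have -> : (fun n => (root_scale (2 * d) n.+1 (polyS (rconv_iter d m p n)))`_(d * 2))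
      = fun _ => 1.
    apply: funext => n; rewrite coefE dvdn_mull // mulnK //.
    have [h0 _ _] := main n.
    move: h0; rewrite /rcoef expr0 mul1r subn0 => ->.
    by rewrite mulr1 mulnC mulVf // expf_neq0 // pnatr_eq0.
  exact: cvg_cst.
Qed.
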